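(* Let $G$ be a graph and let $v, w, x$ be vertices of $G$ such that $v$ is adjacent only to $w$, and $w$ is adjacent only to $v$ and $x$. If $F$ is a minimal fort of $G$ with $v, w \in F$, then $F \setminus \{v, w, x\}$ is a minimal fort of $G - \{v, w, x\}$.
   Context: A fort of a graph $G$ is a nonempty set $F\subseteq V(G)$ such that every vertex outside $F$ is adjacent to either zero or at least two vertices of $F$; it is minimal if no proper subset is a fort. *)

(* Defs.v *)
(* A simple graph G is a symmetric irreflexive relation
   e : rel T on a finite vertex type T. *)
From mathcomp Require Import all_boot.
Set Implicit Arguments. Unset Strict Implicit. Unset Printing Implicit Defensive.

Section Forts.
Variable T : finType.

Definition nbhd (e : rel T) (u : T) : {set T} := [set y | e u y].

(* F is a fort of the induced subgraph G[U]: F is a nonempty set of vertices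
   of G[U], and every vertex of G[U] outside F is adjacent (in G[U]) to
   either zero or at least two vertices of F. *)
Definition fort_in (e : rel T) (U F : {set T}) : bool :=
  [&& F != set0, F \subset U &
      [forall u in U :\: F,
         (#|(nbhd e u :&: U) :&: F| == 0) || (2 <= #|(nbhd e u :&: U) :&: F|)]].

Definition minimal_fort_in (e : rel T) (U F : {set T}) : bool :=
  fort_in e U F && [forall F' : {set T}, (F' \proper F) ==> ~~ fort_in e U F'].

Definition fort (e : rel T) (F : {set T}) : bool := fort_in e setT F.
Definition minimal_fort (e : rel T) (F : {set T}) : bool :=
  minimal_fort_in e setT F.

End Forts.

(* Main.v *)
Require Import Defs.
From mathcomp Require Import all_boot.

Theorem mainTheorem11 (T : finType) (e : rel T)
  (esym : symmetric e) (eirr : irreflexive e)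
  (v w x : T) (Hxv : x != v)
  (Hv : nbhd e v = [set w]) (Hw : nbhd e w = [set v; x])
  (F : {set T}) (HF : minimal_fort e F) (HvF : v \in F) (HwF : w \in F) :
  minimal_fort_in e (~: [set v; w; x]) (F :\: [set v; w; x]).
Proof.
have ev y : e v y = (y == w) by have := congr1 (fun S : {set T} => y \in S) Hv; rewrite !inE.
have ew y : e w y = (y == v) || (y == x) by have := congr1 (fun S : {set T} => y \in S) Hw; rewrite !inE.
have ev' y : e y v = (y == w) by rewrite esym.
have ew' y : e y w = (y == v) || (y == x) by rewrite esym.
have nvw : v != w by apply/negP => /eqP E; have := eirr v; rewrite {2}E ev eqxx.
have nwx : w != x by apply/negP => /eqP E; have := eirr w; rewrite {2}E ew eqxx orbT.
move: HF; rewrite /minimal_fort /minimal_fort_in /fort_in => /andP[/and3P[_ _ /forallP HFf] /forallP Hmin].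
have HFc u : u \notin F -> (#|nbhd e u :&: F| == 0) || (2 <= #|nbhd e u :&: F|).
  by move=> uF; have := HFf u; rewrite !inE uF setIT.
have Hmin' (H : {set T}) : H \proper F -> H != set0 -> (forall u, u \notin H -> (#|nbhd e u :&: H| == 0) || (2 <= #|nbhd e u :&: H|)) -> False.
  move=> pH nH cH; have := Hmin H; rewrite pH /= nH subsetT /=; apply/negP/negPn.
  by apply/forallP => u; apply/implyP; rewrite !inE setIT andbT => uH; exact: cH.
have xF : x \notin F.
  apply/negP => xF; apply: (Hmin' (F :\ w)).
  - by apply/properP; split; [exact: subD1set | exists w => //; rewrite !inE eqxx].
  - by apply/set0Pn; exists v; rewrite !inE nvw.
  move=> u; rewrite !inE negb_and negbK => /orP[/eqP->|uF].
    have -> : nbhd e w :&: (F :\ w) = [set v; x].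
      apply/setP => y; rewrite !inE ew; case: (eqVneq y v) => [->|_]; first by rewrite nvw.
      by case: (eqVneq y x) => [->|//]; rewrite eq_sym nwx.
    by rewrite cards2 (eq_sym v x) Hxv.
  have -> : nbhd e u :&: (F :\ w) = nbhd e u :&: F.
    apply/setP => y; rewrite !inE; case: (eqVneq y w) => [->|//]; rewrite ew'.
    by case: (eqVneq u v) uF => [->|_]; [rewrite HvF | case: (eqVneq u x) => [->|//]; rewrite xF].
  exact: HFc.
have xx : e x w by rewrite ew' eqxx orbT.
have nF' : F :\: [set v; w; x] != set0.
  have := HFc x xF; have wN : w \in nbhd e x :&: F by rewrite !inE xx HwF.
  have -> : (#|nbhd e x :&: F| == 0) = false by apply/negbTE; rewrite -lt0n; apply/card_gt0P; exists w.
  move=> /= c2; have : ~~ (nbhd e x :&: F \subset [set w]).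
    by apply/negP => /subset_leq_card; rewrite cards1; case: ltngtP c2.
  case/subsetPn => y; rewrite !inE => /andP[xy yF] yw; apply/set0Pn; exists y.
  have yv : y != v by apply/negP => /eqP E; move: xy; rewrite E ev' eq_sym (negbTE nwx).
  have yx : y != x by apply/negP => /eqP E; move: xy; rewrite E eirr.
  by rewrite !inE yF (negbTE yw) (negbTE yv) (negbTE yx).
have cntU u (A : {set T}) : A \subset ~: [set v; w; x] ->
    nbhd e u :&: ~: [set v; w; x] :&: A = nbhd e u :&: A.
  by move=> sA; rewrite -setIA (setIidPr sA).
have uvw u : u \notin [set v; w; x] -> e u v = false /\ e u w = false.
  rewrite !inE => /norP[/norP[uv uw] ux]; rewrite ev' ew' (negbTE uv) (negbTE uw) (negbTE ux); done.
rewrite /minimal_fort_in /fort_in nF' subsetDr /=; apply/andP; split.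
  apply/forallP => u; apply/implyP; rewrite in_setD => /andP[uF' uU].
  have {}uU : u \notin [set v; w; x] by rewrite inE in uU.
  have uF : u \notin F by move: uF'; rewrite in_setD uU.
  rewrite cntU ?subsetDr //.
  have -> : nbhd e u :&: (F :\: [set v; w; x]) = nbhd e u :&: F.
    have [euv euw] := uvw u uU.
    apply/setP => y; rewrite !inE; case: (eqVneq y v) => [->|]; first by rewrite euv.
    case: (eqVneq y w) => [->|]; first by rewrite euw.
    by case: (eqVneq y x) => [->|] //=; rewrite (negbTE xF) andbF.
  exact: HFc.
apply/forallP => F2; apply/implyP => pF; apply/negP => /and3P[n0 sU /forallP cF].
have pF2 : F2 \proper F by apply: (proper_sub_trans pF); apply: subsetDl.
have F2U y : y \in F2 -> y \notin [set v; w; x].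
  by move=> yF; have := subsetP sU y yF; rewrite inE.
have cU u : u \notin F2 -> u \notin [set v; w; x] -> (#|nbhd e u :&: F2| == 0) || (2 <= #|nbhd e u :&: F2|).
  by move=> uF uN; have := cF u; rewrite !inE uF /=; rewrite !inE in uN; rewrite uN cntU.
case: (eqVneq (nbhd e x :&: F2) set0) => [Ex|Nx].
  apply: (Hmin' F2 pF2 n0) => u uF.
  case: (boolP (u \in [set v; w; x])) => [|uN]; last exact: cU.
  rewrite !inE => /orP[/orP[]|]/eqP->; last by rewrite Ex cards0.
    have -> : nbhd e v :&: F2 = set0; last by rewrite cards0.
    apply/setP => y; rewrite !inE ev; case: (eqVneq y w) => [->|//].
    by apply/negP => /F2U; rewrite !inE eqxx orbT.
  have -> : nbhd e w :&: F2 = set0; last by rewrite cards0.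
  apply/setP => y; rewrite !inE ew; case: (eqVneq y v) => [->|/=].
    by apply/negP => /F2U; rewrite !inE eqxx.
  case: (eqVneq y x) => [->|//].
  by move=> _; apply/negP => /F2U; rewrite !inE eqxx !orbT.
case/set0Pn: Nx => y0; rewrite !inE => /andP[xy0 y0F].
apply: (Hmin' (F2 :|: [set v; w])).
- move/properP: pF => [sF [z zF zF2]]; apply/properP; split.
    rewrite subUset; apply/andP; split; first exact: (subset_trans sF (subsetDl _ _)).
    by apply/subsetP => y; rewrite !inE => /orP[]/eqP->.
  exists z; first by move: zF; rewrite inE => /andP[].
  move: zF; rewrite !inE => /andP[/norP[/norP[zv zw] _] _].
  by rewrite (negbTE zF2) (negbTE zv) (negbTE zw).
- by apply/set0Pn; exists v; rewrite !inE eqxx orbT.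
move=> u; rewrite !inE => /norP[uF /norP[uv uw]].
case: (eqVneq u x) => [->|ux].
  have y0w : y0 != w by apply/negP => /eqP E; move: (F2U _ y0F); rewrite E !inE eqxx orbT.
  have : [set w; y0] \subset nbhd e x :&: (F2 :|: [set v; w]).
    apply/subsetP => y; rewrite !inE => /orP[]/eqP-> /=; rewrite ?xx ?xy0 ?y0F ?eqxx ?orbT //.
  move/subset_leq_card; rewrite cards2 eq_sym y0w => ->; by rewrite orbT.
have uN : u \notin [set v; w; x] by rewrite !inE (negbTE uv) (negbTE uw) (negbTE ux).
have [euv euw] := uvw u uN.
have -> : nbhd e u :&: (F2 :|: [set v; w]) = nbhd e u :&: F2.
  apply/setP => y; rewrite !inE; case: (eqVneq y v) => [->|]; first by rewrite euv.
  move=> _; case: (eqVneq y w) => [->|_]; [by rewrite euw | by rewrite !orbF].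
exact: cU.
Qed.
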